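(* Let $n\ge2$, $\mathbf p^0\in\Delta_n$, $\mathbf p^{t+1}=F(\mathbf p^t)$. Then the sequence $L^t=\sum_k(p^t_k)^2$ converges, i.e. $L^\infty=\lim_{t\to\infty}L^t$ exists.
   Context: $\Delta_n=\{\mathbf p\in\mathbb R^n: p_i\ge 0,\ \sum_i p_i=1\}$. For $\mathbf p\in\Delta_n$, $L(\mathbf p)=\sum_{k}p_k^2$ and $F(\mathbf p)_i=p_i\frac{n-p_i}{n-L(\mathbf p)}$. *)

(* Defs.v *)
From mathcomp Require Import all_boot all_order all_algebra.
From mathcomp Require Import all_classical all_reals all_analysis.
Set Implicit Arguments. Unset Strict Implicit. Unset Printing Implicit Defensive.
Import Order.TTheory GRing.Theory Num.Theory.
Local Open Scope ring_scope.

Definition simplex (R : realType) (n : nat) (p : 'I_n -> R) : Prop :=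
  (forall i, 0 <= p i) /\ \sum_(i < n) p i = 1.

Definition Lsq (R : realType) (n : nat) (p : 'I_n -> R) : R :=
  \sum_(k < n) p k ^+ 2.

Definition Fmap (R : realType) (n : nat) (p : 'I_n -> R) : 'I_n -> R :=
  fun i => p i * (n%:R - p i) / (n%:R - Lsq p).

Definition Forbit (R : realType) (n : nat) (p0 : 'I_n -> R) (t : nat) : 'I_n -> R :=
  iter t (@Fmap R n) p0.

(* Main.v *)
Require Import Defs.
From mathcomp Require Import all_boot all_order all_algebra.
From mathcomp Require Import all_classical all_reals all_analysis.
From mathcomp Require Import ring lra.
Import Order.TTheory GRing.Theory Num.Theory numFieldNormedType.Exports.
Local Open Scope ring_scope.

Section S.
Variables (R : realType) (n : nat).
Hypothesis n2 : (2 <= n)%N.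

Lemma simplex_le1 {p : 'I_n -> R} i : simplex p -> p i <= 1.
Proof.
case=> p0 s1; rewrite -s1 (bigD1 i) //= lerDl; apply: sumr_ge0 => j _; exact: p0.
Qed.

Lemma Lsq_ge0 {p : 'I_n -> R} : 0 <= Lsq p.
Proof. apply: sumr_ge0 => i _; exact: sqr_ge0. Qed.

Lemma Lsq_le1 {p : 'I_n -> R} : simplex p -> Lsq p <= 1.
Proof.
move=> sp; have [p0 s1] := sp; rewrite -s1; apply: ler_sum => i _.
have := simplex_le1 i sp; have := p0 i; rewrite expr2 => a b; nra.
Qed.

Lemma n_ge2 : 2 <= (n%:R : R).
Proof. by rewrite (ler_nat R 2 n). Qed.

Lemma den_gt0 {p : 'I_n -> R} : simplex p -> 0 < n%:R - Lsq p.
Proof. move=> sp; have := Lsq_le1 sp; have := n_ge2; lra. Qed.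

Lemma Fmap_simplex {p : 'I_n -> R} : simplex p -> simplex (Fmap p).
Proof.
move=> sp; have [p0 s1] := sp; have d0 := den_gt0 sp; have n2' := n_ge2.
split.
  move=> i; rewrite /Fmap; apply: divr_ge0; last exact: ltW.
  have := simplex_le1 i sp; have := p0 i => a b; nra.
rewrite /Fmap -mulr_suml.
have -> : \sum_(i < n) p i * (n%:R - p i) = n%:R - Lsq p.
  rewrite /Lsq.
  under eq_bigr => i _ do rewrite mulrBr -expr2 [p i * _]mulrC.
  by rewrite sumrB -mulr_sumr s1 mulr1.
by rewrite divff // gt_eqF.
Qed.

Lemma Fmap_Lsq {p : 'I_n -> R} : simplex p -> Lsq (Fmap p) <= Lsq p.
Proof.
move=> sp; have [p0 s1] := sp; have d0 := den_gt0 sp; have n2' := n_ge2.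
set m := Lsq p; set d := n%:R - m.
have hm1 : m <= 1 := Lsq_le1 sp.
have hd : d = n%:R - m by [].
set g' := n%:R ^+ 2 - 4%:R * n%:R * m + 3%:R * m ^+ 2.
have key : m * d ^+ 2 - \sum_(i < n) (p i * (n%:R - p i)) ^+ 2 =
   \sum_(i < n) (- g' * (p i ^+ 2 - m * p i)) +
   \sum_(i < n) (p i * (p i - m) ^+ 2 * (2%:R * n%:R - 2%:R * m - p i)).
  rewrite -big_split /=.
  have -> : m * d ^+ 2 = \sum_(i < n) p i * (m * d ^+ 2).
    by rewrite -mulr_suml s1 mul1r.
  rewrite -sumrB; apply: eq_bigr => i _; rewrite /g' /d; ring.
have h1 : \sum_(i < n) (- g' * (p i ^+ 2 - m * p i)) = 0.
  by rewrite -mulr_sumr sumrB -mulr_sumr s1 mulr1 subrr mulr0.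
have h2 : 0 <= \sum_(i < n) (p i * (p i - m) ^+ 2 * (2%:R * n%:R - 2%:R * m - p i)).
  apply: sumr_ge0 => i _; apply: mulr_ge0; first apply: mulr_ge0.
  - exact: p0.
  - exact: sqr_ge0.
  - have := simplex_le1 i sp; lra.
rewrite h1 add0r in key.
have e : Lsq (Fmap p) = (\sum_(i < n) (p i * (n%:R - p i)) ^+ 2) / d ^+ 2.
  rewrite /Lsq /Fmap mulr_suml; apply: eq_bigr => i _; by rewrite expr_div_n.
rewrite e ler_pdivrMr; last by rewrite exprn_gt0.
have := h2; rewrite -key; lra.
Qed.

End S.

Theorem proposition4 (R : realType) (n : nat) (p0 : 'I_n -> R) :
  (2 <= n)%N -> simplex p0 ->
  cvgn (fun t : nat => Lsq (Forbit p0 t)).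
Proof.
move=> n2 sp.
have inv : forall t, simplex (Forbit p0 t).
  elim=> [|t IH] //=; exact: Fmap_simplex.
apply: nonincreasing_is_cvgn.
  apply/nonincreasing_seqP => t.
  have h := @Fmap_Lsq R n n2 _ (inv t).
  rewrite /Forbit iterS; rewrite /Forbit in h; exact: h.
exists 0 => _ [t _ <-]; exact: Lsq_ge0.
Qed.
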